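(* Let $n>2k$ be integers with $k\ge 2$, $X=\{1,\dots,n\}$, let $\mathcal F\subset\binom{X}{k}$ be a saturated intersecting family, $\mathcal B=\mathcal B(\mathcal F)$, and $t=\min\{|B|\colon B\in\mathcal B\}$, and assume $t\ge 2$. For $t\le \ell\le k$ let $\mathcal F_\ell$ be the set of $F\in\mathcal F$ with $\max\{|B|\colon B\in\mathcal B,\ B\subset F\}=\ell$, and let $$\mathcal I_\ell=\{F\cap F'\colon F\in\mathcal F_\ell,\ F'\in\mathcal F_t\cup\dots\cup\mathcal F_\ell\}.$$ Then for every $\ell$ with $t\le\ell\le k$ and $\tau(\mathcal B^{(\le\ell)})\ge 2$, $$|\mathcal I_\ell|\le (2^\ell-1)\,|\mathcal B^{(\ell)}|\sum_{0\le i\le k-\ell}\binom{n}{i} < 2^\ell\,\ell^2 k^{\ell-2}\sum_{0\le i\le k-\ell}\binom{n}{i}.$$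
   Context: $\binom{X}{k}$ is the family of $k$-subsets of $X$. A family is intersecting if any two of its members intersect. For $\mathcal G\subset 2^X$, $\mathcal T(\mathcal G):=\{T\subset X\colon |T|\le k,\ T\cap G\neq\emptyset \text{ for all } G\in\mathcal G\}$. An intersecting family $\mathcal F\subset\binom{X}{k}$ is saturated if for every $G\in\binom{X}{k}\setminus\mathcal F$ the family $\mathcal F\cup\{G\}$ is not intersecting. $\mathcal B(\mathcal F)$ denotes the family of inclusion-minimal members of $\mathcal T(\mathcal F)$. For a family $\mathcal H$, $\mathcal H^{(i)}:=\{H\in\mathcal H\colon |H|=i\}$ and $\mathcal H^{(\le \ell)}:=\bigcup_{i=1}^{\ell}\mathcal H^{(i)}$. The covering number $\tau(\mathcal H)$ is the minimum size of a set $T$ with $T\cap H\neq\emptyset$ for all $H\in\mathcal H$. *)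

(* Defs.v *)
(* Ground set X = {1,...,n} is modelled by 'I_n. *)
From mathcomp Require Import all_boot all_order.
Set Implicit Arguments. Unset Strict Implicit. Unset Printing Implicit Defensive.

Section Defs.
Variable n : nat.
Notation fam := {set {set 'I_n}}.

Definition k_uniform (k : nat) (F : fam) : Prop := forall A, A \in F -> #|A| = k.

Definition intersecting (F : fam) : Prop :=
  forall A B, A \in F -> B \in F -> A :&: B != set0.

Definition saturated (k : nat) (F : fam) : Prop :=
  [/\ k_uniform k F, intersecting F &
      forall G : {set 'I_n}, #|G| = k -> G \notin F -> ~ intersecting (G |: F)].

Definition Tfam (k : nat) (G : fam) : fam :=
  [set T : {set 'I_n} | (#|T| <= k) && [forall A in G, T :&: A != set0]].

Definition Bfam (k : nat) (F : fam) : fam :=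
  [set T in Tfam k F | [forall T' in Tfam k F, (T' \subset T) ==> (T' == T)]].

Definition layer (H : fam) (i : nat) : fam := [set A in H | #|A| == i].
Definition layer_le (H : fam) (l : nat) : fam :=
  [set A in H | (1 <= #|A|) && (#|A| <= l)].

(* covering number; if no transversal exists, the value is n.+1 (i.e. "infinite") *)
Definition is_cover (T : {set 'I_n}) (H : fam) : bool :=
  [forall A in H, T :&: A != set0].
Definition tau (H : fam) : nat :=
  \big[minn/n.+1]_(T : {set 'I_n} | is_cover T H) #|T|.

Definition Flev (k : nat) (F : fam) (l : nat) : fam :=
  [set A in F | \max_(B in Bfam k F | B \subset A) #|B| == l].

Definition Ifam (k : nat) (F : fam) (t l : nat) : fam :=
  [set A :&: A' | A in Flev k F l,
                  A' in \bigcup_(t <= j < l.+1) Flev k F j].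
End Defs.

(* Main.v *)
Require Import Defs.
From mathcomp Require Import all_boot all_order zify.
Set Implicit Arguments. Unset Strict Implicit. Unset Printing Implicit Defensive.

Lemma card_bigcup_le (I T : finType) (P : pred I) (A : I -> {set T}) :
  #|\bigcup_(i | P i) A i| <= \sum_(i | P i) #|A i|.
Proof.
apply: (@big_ind2 {set T} nat (fun U m => #|U| <= m) set0 (@setU T) 0 addn) => //.
- by rewrite cards0.
- move=> U1 m1 U2 m2 h1 h2; apply: leq_trans (leq_card_setU U1 U2) _.
  exact: leq_add.
Qed.

Lemma ext_subset (T : finType) (m : nat) (B C : {set T}) :
  B \subset C -> #|B| + m <= #|C| ->
  exists G : {set T}, [/\ B \subset G, G \subset C & #|G| = #|B| + m].
Proof.
elim: m B => [|m IH] B BC hc; first by exists B; rewrite addn0.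
have : B \proper C by rewrite properEcard BC; apply: leq_trans hc; rewrite addnS ltnS leq_addr.
case/properP=> _ [x xC xB].
have h1 : x |: B \subset C by rewrite subUset sub1set xC BC.
have h2 : #|x |: B| + m <= #|C| by rewrite cardsU1 xB add1n addSnnS.
case: (IH _ h1 h2) => G [G1 G2 G3]; exists G; split => //.
- exact: subset_trans (subsetUr _ _) G1.
- by rewrite G3 cardsU1 xB add1n addSnnS.
Qed.

Lemma tau_le (n : nat) (T : {set 'I_n}) H : is_cover T H -> tau H <= #|T|.
Proof.
move=> hT; rewrite /tau.
have : T \in index_enum {set 'I_n} by rewrite mem_index_enum.
elim: (index_enum _) => [//|a r IH] /=.
rewrite big_cons in_cons; case/orP => [/eqP <-|hr].
  by rewrite hT geq_minl.
case: ifP => _; last exact: IH.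
exact: leq_trans (geq_minr _ _) (IH hr).
Qed.

Lemma card_small (n m : nat) :
  #|[set R : {set 'I_n} | #|R| <= m]| = \sum_(0 <= i < m.+1) 'C(n, i).
Proof.
elim: m => [|m IH].
  rewrite big_nat1 -[n in 'C(n,_)]card_ord -card_draws.
  by apply: eq_card => R; rewrite !inE leqn0.
rewrite big_nat_recr //= -IH -[n in 'C(n,_)]card_ord -card_draws.
have -> : [set R : {set 'I_n} | #|R| <= m.+1] =
  [set R : {set 'I_n} | #|R| <= m] :|: [set R : {set 'I_n} | #|R| == m.+1].
  by apply/setP => R; rewrite !inE leq_eqVlt ltnS orbC.
rewrite cardsU; have -> : [set R : {set 'I_n} | #|R| <= m] :&: [set R : {set 'I_n} | #|R| == m.+1] = set0.
  apply/setP => R; rewrite !inE; case: eqP => [->|]; first by rewrite ltnn.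
  by rewrite andbF.
by rewrite cards0 subn0.
Qed.

Section Sec.
Variables (n k : nat) (F : {set {set 'I_n}}).

Lemma BfamT (B : {set 'I_n}) : B \in Bfam k F -> B \in Tfam k F.
Proof. by rewrite inE => /andP[]. Qed.

Lemma Bfam_card (B : {set 'I_n}) : B \in Bfam k F -> #|B| <= k.
Proof. by move/BfamT; rewrite inE => /andP[]. Qed.

Lemma Bfam_meet (B A : {set 'I_n}) : B \in Bfam k F -> A \in F -> B :&: A != set0.
Proof. by move/BfamT; rewrite inE => /andP[_ /forall_inP]; apply. Qed.

Lemma Bfam_min (B S : {set 'I_n}) : B \in Bfam k F -> S \proper B -> S \notin Tfam k F.
Proof.
rewrite inE => /andP[_ /forall_inP h] /properP[sSB [x xB xS]].
apply/negP => /h; rewrite sSB /= => /eqP eSB.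
by rewrite eSB xB in xS.
Qed.

Lemma Bfam_int (B1 B2 : {set 'I_n}) : 1 <= k -> 2 * k < n -> saturated k F ->
  B1 \in Bfam k F -> B2 \in Bfam k F -> B1 :&: B2 != set0.
Proof.
move=> k1 nk [unif inter sat] h1 h2; apply/negP => /eqP dis.
have sub : B1 \subset ~: B2.
  apply/subsetP => x xB1; rewrite inE; apply/negP => xB2.
  have : x \in B1 :&: B2 by rewrite inE xB1 xB2.
  by rewrite dis inE.
have c1 := Bfam_card h1; have c2 := Bfam_card h2.
have hc : #|B1| + (k - #|B1|) <= #|~: B2|.
  rewrite subnKC // cardsCs setCK card_ord.
  by apply: leq_trans (leq_sub2l _ c2); rewrite leq_subRL; [lia|lia].
case: (ext_subset sub hc) => G [BG GC cG]; rewrite subnKC // in cG.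
have GF : G \notin F.
  apply/negP => GF; move: (Bfam_meet h2 GF); case/set0Pn => x.
  rewrite inE => /andP[xB2 xG]; move: (subsetP GC x xG); by rewrite inE xB2.
apply: (sat G cG GF) => A A'.
have mG : forall A, A \in F -> G :&: A != set0.
  move=> A0 A0F; move: (Bfam_meet h1 A0F); case/set0Pn => x.
  rewrite inE => /andP[xB xA]; apply/set0Pn; exists x.
  by rewrite inE xA (subsetP BG x xB).
rewrite !inE => /orP[/eqP->|hA] /orP[/eqP->|hA'].
- by rewrite setIid -card_gt0 cG; lia.
- exact: mG.
- by rewrite setIC; apply: mG.
- exact: inter.
Qed.

Lemma cnt l (m : nat) (S : {set 'I_n}) : l <= k -> k_uniform k F -> l - #|S| = m ->
  #|[set B in layer (Bfam k F) l | S \subset B]| <= k ^ m.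
Proof.
move=> lk ufam; elim: m S => [|m IH] S hS.
  case: (set_0Vmem [set B in layer (Bfam k F) l | S \subset B]) => [->|[B0]].
    by rewrite cards0.
  rewrite !inE => /andP[/andP[_ /eqP cB0] SB0].
  have eS : S = B0.
    apply/eqP; rewrite eqEcard SB0 cB0; lia.
  rewrite expn0; apply: leq_trans (_ : #|[set S]| <= 1); last by rewrite cards1.
  apply: subset_leq_card; apply/subsetP => B; rewrite !inE => /andP[/andP[_ /eqP cB] SB].
  by rewrite eq_sym eqEcard SB cB eS cB0 leqnn.
case: (set_0Vmem [set B in layer (Bfam k F) l | S \subset B]) => [->|[B0]].
  by rewrite cards0.
rewrite inE => /andP[]; rewrite inE => /andP[B0F /eqP cB0] SB0.
have pS : S \proper B0 by rewrite properEcard SB0 cB0; lia.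
have := Bfam_min B0F pS; rewrite inE negb_and.
have -> : #|S| <= k by lia.
move=> /= /forall_inPn [A AF /negPn /eqP SA].
apply: leq_trans (_ : #|\bigcup_(z in A) [set B in layer (Bfam k F) l | (z |: S) \subset B]| <= _).
  apply: subset_leq_card; apply/subsetP => B; rewrite inE => /andP[]; rewrite inE => /andP[BF cB] SB.
  case/set0Pn: (Bfam_meet BF AF) => z; rewrite inE => /andP[zB zA].
  apply/bigcupP; exists z => //; rewrite inE; apply/andP; split; first by rewrite inE BF cB.
  by rewrite subUset sub1set zB SB.
apply: leq_trans (card_bigcup_le _ _) _.
apply: leq_trans (_ : \sum_(z in A) k ^ m <= _).
  apply: leq_sum => z zA; apply: IH.
  have zS : z \notin S.
    apply/negP => zS; have : z \in S :&: A by rewrite inE zS zA.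
    by rewrite SA inE.
  rewrite cardsU1 zS; lia.
by rewrite sum_nat_const (ufam _ AF) -expnS.
Qed.
End Sec.

Section Sec2.
Variables (n k : nat) (F : {set {set 'I_n}}).

Lemma layer_bound l : 2 <= k -> 2 * k < n -> saturated k F -> 2 <= l -> l <= k ->
  2 <= tau (layer_le (Bfam k F) l) ->
  #|layer (Bfam k F) l| <= l * l * k ^ (l - 2).
Proof.
move=> k2 nk sat l2 lk ht.
have ufam : k_uniform k F by case: sat.
have k1 : 1 <= k by lia.
case: (set_0Vmem (layer (Bfam k F) l)) => [->|[B0 hB0]]; first by rewrite cards0.
move: (hB0); rewrite inE => /andP[B0F /eqP cB0].
have sub : layer (Bfam k F) l \subset
   \bigcup_(x in B0) [set B in layer (Bfam k F) l | [set x] \subset B].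
  apply/subsetP => B hB; move: (hB); rewrite inE => /andP[BF _].
  case/set0Pn: (Bfam_int k1 nk sat B0F BF) => x; rewrite inE => /andP[xB0 xB].
  by apply/bigcupP; exists x => //; rewrite inE hB sub1set xB.
apply: leq_trans (subset_leq_card sub) _.
apply: leq_trans (card_bigcup_le _ _) _.
apply: leq_trans (_ : \sum_(x in B0) (l * k ^ (l - 2)) <= _); last first.
  by rewrite sum_nat_const cB0 mulnA.
apply: leq_sum => x xB0.
have : ~~ is_cover [set x] (layer_le (Bfam k F) l).
  apply/negP => /tau_le; rewrite cards1 => h; lia.
rewrite /is_cover => /forall_inPn [B1 B1L /negPn /eqP xB1].
move: B1L; rewrite inE => /andP[B1F /andP[_ cB1]].
have sub2 : [set B in layer (Bfam k F) l | [set x] \subset B] \subset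
   \bigcup_(y in B1) [set B in layer (Bfam k F) l | (y |: [set x]) \subset B].
  apply/subsetP => B; rewrite inE => /andP[hB xB]; move: (hB); rewrite inE => /andP[BF _].
  case/set0Pn: (Bfam_int k1 nk sat B1F BF) => y; rewrite inE => /andP[yB1 yB].
  by apply/bigcupP; exists y => //; rewrite inE hB subUset sub1set yB xB.
apply: leq_trans (subset_leq_card sub2) _.
apply: leq_trans (card_bigcup_le _ _) _.
apply: leq_trans (_ : \sum_(y in B1) k ^ (l - 2) <= _).
  apply: leq_sum => y yB1; apply: cnt => //.
  have yx : y \notin [set x].
    apply/negP => yx; have : y \in [set x] :&: B1 by rewrite inE yx yB1.
    by rewrite xB1 inE.
  rewrite cardsU1 yx cards1; lia.
by rewrite sum_nat_const leq_mul2r cB1 orbT.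
Qed.

Lemma Ifam_bound t l : k_uniform k F -> 1 <= l ->
  #|Ifam k F t l| <=
    (2 ^ l - 1) * #|layer (Bfam k F) l| * \sum_(0 <= i < (k - l).+1) 'C(n, i).
Proof.
move=> ufam l1.
pose Rs := [set R : {set 'I_n} | #|R| <= k - l].
have sub : Ifam k F t l \subset
  \bigcup_(B in layer (Bfam k F) l) \bigcup_(S in powerset B :\ set0)
     [set S :|: R | R in Rs].
  apply/subsetP => X /imset2P [A A' AF A'F ->].
  move: AF; rewrite inE => /andP[AF hmax].
  have [B [BF BA cB]] : exists B, [/\ B \in Bfam k F, B \subset A & #|B| = l].
    move: hmax; apply: (@big_ind nat (fun m => m == l -> exists B,
       [/\ B \in Bfam k F, B \subset A & #|B| = l]) 0 maxn).
    - by move=> /eqP l0; rewrite -l0 in l1.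
    - move=> x y hx hy; case: (leqP x y) => hxy.
        exact: hy.
      exact: hx.
    - by move=> B /andP[BF BA] /eqP cB; exists B.
  have A'F' : A' \in F.
    apply: (subsetP _ _ A'F).
    apply: (@big_ind {set {set 'I_n}} (fun U => U \subset F) set0 (@setU _)).
    - exact: sub0set.
    - by move=> U V hU hV; rewrite subUset hU hV.
    - by move=> j _; apply/subsetP => Z; rewrite inE => /andP[].
  apply/bigcupP; exists B; first by rewrite inE BF cB eqxx.
  apply/bigcupP; exists (B :&: A').
    by rewrite !inE (Bfam_meet BF A'F') andTb subsetIl.
  apply/imsetP; exists ((A :&: A') :\: B).
    rewrite inE; apply: leq_trans (_ : #|A :\: B| <= _).
      by apply: subset_leq_card; apply: setSD; apply: subsetIl.
    by rewrite cardsDS // ufam // cB.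
  apply/setP => x; rewrite !inE.
  case: (boolP (x \in B)) => xB /=; last by [].
  by rewrite (subsetP BA x xB) orbF.
apply: leq_trans (subset_leq_card sub) _.
apply: leq_trans (card_bigcup_le _ _) _.
rewrite -card_small.
apply: leq_trans (_ : \sum_(B in layer (Bfam k F) l) ((2 ^ l - 1) * #|Rs|) <= _); last first.
  by rewrite sum_nat_const mulnA [#|_| * _]mulnC.
apply: leq_sum => B; rewrite inE => /andP[_ /eqP cB].
apply: leq_trans (card_bigcup_le _ _) _.
apply: leq_trans (_ : \sum_(S in powerset B :\ set0) #|Rs| <= _).
  by apply: leq_sum => S _; apply: leq_imset_card.
rewrite sum_nat_const leq_mul2r; apply/orP; right.
have := cardsD1 set0 (powerset B); rewrite card_powerset cB.
by rewrite inE sub0set add1n => ->; rewrite subn1.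
Qed.
End Sec2.

Theorem lemma3p1 (n k : nat) (F : {set {set 'I_n}}) (t : nat) :
  2 <= k -> 2 * k < n ->
  saturated k F ->
  (* t = min{|B| : B in B(F)} *)
  (exists2 B, B \in Bfam k F & #|B| = t) ->
  (forall B, B \in Bfam k F -> t <= #|B|) ->
  2 <= t ->
  forall l : nat, t <= l -> l <= k ->
  2 <= tau (layer_le (Bfam k F) l) ->
  #|Ifam k F t l| <=
    (2 ^ l - 1) * #|layer (Bfam k F) l| * \sum_(0 <= i < (k - l).+1) 'C(n, i)
  /\
  (2 ^ l - 1) * #|layer (Bfam k F) l| * \sum_(0 <= i < (k - l).+1) 'C(n, i)
    < 2 ^ l * l ^ 2 * k ^ (l - 2) * \sum_(0 <= i < (k - l).+1) 'C(n, i).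
Proof.
move=> k2 nk sat _ _ t2 l tl lk ht.
have ufam : k_uniform k F by case: sat.
have l2 : 2 <= l by exact: leq_trans t2 tl.
split; first by apply: Ifam_bound => //; lia.
have s1 : 0 < \sum_(0 <= i < (k - l).+1) 'C(n, i).
  by rewrite big_ltn // bin0.
have hb := layer_bound k2 nk sat l2 lk ht.
have M0 : 0 < l ^ 2 * k ^ (l - 2) by rewrite muln_gt0 !expn_gt0; lia.
set s := \sum_(0 <= i < (k - l).+1) 'C(n, i).
have h1 : (2 ^ l - 1) * #|layer (Bfam k F) l| * s <= (2 ^ l - 1) * (l ^ 2 * k ^ (l - 2)) * s.
  by rewrite leq_mul2r leq_mul2l hb !orbT.
apply: (leq_ltn_trans h1).
rewrite ltn_pmul2r // -[2 ^ l * l ^ 2 * k ^ (l - 2)]mulnA ltn_pmul2r //.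
have := expn_gt0 2 l; lia.
Qed.
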